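(* Consider the semi-discrete Hermite–DG Vlasov–Maxwell system $\frac{dy}{dt}=\mathcal{F}^N(y)$ on $\mathbb{R}^M$ described in the context, obtained with upwind numerical fluxes in the DG discretization of Maxwell's equations, with initial condition $y(0)$. Let $\{y^\tau\}_{\tau=1,\dots,T/\Delta t}$ be the sequence of approximate solutions produced by the ${N_{GL}}$-stage Gauss–Legendre method with step $\Delta t$ and $y^0=y(0)$, with stages $\mathcal{Y}_i$ and weights $b_i$. Then for every $\tau$, $$\mathcal{E}_{\mathbf{tot}}(y^{\tau+1})-\mathcal{E}_{\mathbf{tot}}(y^\tau)+\Delta t\sum_{i=1}^{{N_{GL}}}b_i\,\mathcal{E}_{\mathbf{bnd}}(\mathcal{Y}_i)\le 0.$$
   Context: Setting: the Vlasov–Maxwell system for $N_s$ plasma species with masses $m^s$, charges $q^s$, on a spatial domain $\Omega_x\subset\mathbb{R}^3$ partitioned into a uniform mesh of hexahedral cells $I$ with faces $\mathsf{f}$, and velocity space $\mathbb{R}^3$. In the Hermite–DG semi-discretization each distribution function is approximated as $f^{s,N}(x,v,t)=\sum_{n,m,p}\sum_{I,l}C^{s,I,l}_{n,m,p}(t)\Psi_{n,m,p}(\xi^s)\varphi^{I,l}(x)$ (asymmetrically weighted Hermite functions in velocity, piecewise polynomials of degree $\le N_{DG}$ on each cell in space) and the electromagnetic fields as piecewise polynomials $E^N(x,t)=\sum_{I,l}E^{I,l}(t)\varphi^{I,l}(x)$, $B^N(x,t)=\sum_{I,l}B^{I,l}(t)\varphi^{I,l}(x)$; the Vlasov equation uses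 upwind fluxes. The vector $y(t)\in\mathbb{R}^M$ of all coefficients $C^{s,I,l}_{n,m,p},E^{I,l},B^{I,l}$ satisfies an autonomous ODE $dy/dt=\mathcal{F}^N(y)$. Energies: $\mathcal{E}_{\mathbf{kin}}(y)=\frac12\sum_s m^s\sum_I\int_I\int_{\mathbb{R}^3}|v|^2f^{s,N}\,dv\,dx$ (linear in $y$); $\mathcal{E}_{E,B}(y)=\frac12(\omega_{ce}/\omega_{pe})^2\sum_I\int_I(|E^N|^2+|B^N|^2)\,dx$ (a quadratic form $y^\top Sy$ with $S$ symmetric); total energy $\mathcal{E}_{\mathbf{tot}}=\mathcal{E}_{\mathbf{kin}}+\mathcal{E}_{E,B}$; boundary energy flux $\mathcal{E}_{\mathbf{bnd}}(y)=\frac12\sum_s m^s\int_{\partial\Omega_x}\int_{\mathbb{R}^3}(n\cdot v)|v|^2f^{s,N}\,dv\,dS$ with $n$ the outward unit normal; jump term $\mathcal{E}_{\mathbf{jump}}(y)=(\omega_{ce}/\omega_{pe})^2\sum_{\mathsf{f}}\frac12\int_{\mathsf{f}}[\![U]\!]_{\mathsf{f}}^\top|\mathbb{F}|[\![U]\!]_{\mathsf{f}}\,dS\ge0$ for upwind Maxwell fluxes, where $U=(E^N,B^N)$, $[\![U]\!]_{\mathsf{f}}$ is its jump across face $\mathsf{f}$ and $|\mathbb{F}|$ is the fixed symmetric positive semidefinite matrix given by the sum of the absolute values of the Maxwell flux matrices. The semi-discrete system satisfies the energy law: along every solution, $\frac{d}{dt}\mathcal{E}_{\mathbf{tot}}(y(t))+\mathcal{E}_{\mathbf{bnd}}(y(t))=-\mathcal{E}_{\mathbf{jump}}(y(t))\le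 0$, for every $y(t)\in\mathbb{R}^M$. The ${N_{GL}}$-stage Gauss–Legendre method is the implicit Runge–Kutta method $\mathcal{Y}_i=y^\tau+\Delta t\sum_{j=1}^{{N_{GL}}}a_{ij}\mathcal{F}^N(\mathcal{Y}_j)$, $y^{\tau+1}=y^\tau+\Delta t\sum_i b_i\mathcal{F}^N(\mathcal{Y}_i)$, with $c_i$ the Gauss–Legendre nodes on $[0,1]$, $q_i(\sigma)=\prod_{j\neq i}(\sigma-c_j)$, $a_{ij}=\int_0^{c_i}q_j/q_j(c_j)$, $b_i=\int_0^1 q_i/q_i(c_i)$. *)

(* Defs.v *)
From HB Require Import structures.
From mathcomp Require Import all_boot all_order all_algebra.
From mathcomp Require Import reals.
Set Implicit Arguments. Unset Strict Implicit. Unset Printing Implicit Defensive.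
Import Order.TTheory GRing.Theory Num.Theory.
Local Open Scope ring_scope.

Section GL.
Variable R : realType.

(* Shifted Legendre polynomial of degree s on [0,1] (Rodrigues formula, up to
   a nonzero constant factor): d^s/dx^s [ x^s (x-1)^s ]. *)
Definition shLeg (s : nat) : {poly R} := ('X ^+ s * ('X - 1) ^+ s)^`(s).

(* c_1,...,c_s are the Gauss-Legendre nodes on [0,1]: s distinct roots of the
   degree-s shifted Legendre polynomial (hence all of its roots). *)
Definition GL_nodes (s : nat) (c : 'I_s -> R) : Prop :=
  injective c /\ forall i, root (shLeg s) (c i).

Definition lagq (s : nat) (c : 'I_s -> R) (j : 'I_s) : {poly R} :=
  \prod_(k < s | k != j) ('X - (c k)%:P).

Definition polyint (p : {poly R}) : {poly R} :=
  \poly_(i < (size p).+1) (if i is k.+1 then p`_k / k.+1%:R else 0).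

Definition GL_a (s : nat) (c : 'I_s -> R) (i j : 'I_s) : R :=
  (polyint (lagq c j)).[c i] / (lagq c j).[c j].
Definition GL_b (s : nat) (c : 'I_s -> R) (i : 'I_s) : R :=
  (polyint (lagq c i)).[1] / (lagq c i).[c i].

End GL.

Section Energy.
Variables (R : realType) (M : nat).
Definition Ekin (l : 'cV[R]_M) (y : 'cV[R]_M) : R := (l^T *m y) 0 0.
Definition EEB (S : 'M[R]_M) (y : 'cV[R]_M) : R := (y^T *m S *m y) 0 0.
Definition Etot (l : 'cV[R]_M) (S : 'M[R]_M) (y : 'cV[R]_M) : R :=
  Ekin l y + EEB S y.
(* Directional derivative of E_tot at y in direction v (written out):
   d/dt E_tot(y(t)) = dEtot l S y (dy/dt). *)
Definition dEtot (l : 'cV[R]_M) (S : 'M[R]_M) (y v : 'cV[R]_M) : R :=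
  (l^T *m v) 0 0 + (v^T *m S *m y) 0 0 + (y^T *m S *m v) 0 0.
End Energy.

(* Main.v *)
Require Import Defs.
From HB Require Import structures.
From mathcomp Require Import all_boot all_order all_algebra.
From mathcomp Require Import reals polyrcf.
From mathcomp Require Import ring lra zify.
Import Order.TTheory GRing.Theory Num.Theory.
Local Open Scope ring_scope.
Set Implicit Arguments. Unset Strict Implicit. Unset Printing Implicit Defensive.

Section PolyAux.
Variable R : realType.
Implicit Types p q P : {poly R}.

Lemma natS_neq0 k : (k.+1)%:R != 0 :> R.
Proof. by rewrite pnatr_eq0. Qed.

Lemma polyint_deriv p : (polyint p)^`() = p.
Proof.
apply/polyP => i; rewrite coef_deriv /polyint coef_poly ltnS.
case: ltnP => Hi.
  by have h := natS_neq0 i; rewrite -mulr_natr mul1r -(mulr_natr (p`_i / i.+1%:R)) divfK.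
by rewrite mul0rn (leq_sizeP _ _ Hi i (leqnn i)).
Qed.

Lemma polyint_at0 p : (polyint p).[0] = 0.
Proof. by rewrite horner_coef0 /polyint (coef_poly (size p).+1). Qed.

Lemma size_polyint p : (size (polyint p) <= (size p).+1)%N.
Proof. exact: size_poly. Qed.

Lemma deriv0_const q : q^`() = 0 -> q = (q`_0)%:P.
Proof.
move=> h; apply/polyP => i; rewrite coefC; case: i => [//|i].
have := congr1 (fun r : {poly R} => r`_i) h; rewrite /= coef_deriv coef0.
by move/eqP; rewrite -mulr_natr mulf_eq0 (negPf (natS_neq0 _)) orbF => /eqP.
Qed.

Definition Iint p := (polyint p).[1].

Lemma ftc P p : P^`() = p -> Iint p = P.[1] - P.[0].
Proof.
move=> hP; set q := P - polyint p.
have hq : q^`() = 0 by rewrite /q derivB polyint_deriv hP subrr.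
have e := deriv0_const hq.
have : q.[1] = q.[0] by rewrite e !hornerC.
rewrite /q !hornerD !hornerN polyint_at0 /Iint subr0 => e2.
by rewrite -e2; ring.
Qed.

Lemma Iint_lin a p q : Iint (a *: p + q) = a * Iint p + Iint q.
Proof.
rewrite (@ftc (a *: polyint p + polyint q)); last by rewrite derivD derivZ !polyint_deriv.
by rewrite !hornerD !hornerZ !polyint_at0 /Iint; ring.
Qed.

Lemma Iint0 : Iint 0 = 0.
Proof. by rewrite (@ftc 0) ?deriv0 // !horner0 subrr. Qed.

Lemma Iint_sum (I : finType) (a : I -> R) (F : I -> {poly R}) :
  Iint (\sum_i a i *: F i) = \sum_i a i * Iint (F i).
Proof.
elim/big_rec2: _ => [|i x y _ IH]; first exact: Iint0.
by rewrite Iint_lin IH.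
Qed.

Lemma Iint_ibp p q :
  Iint (p^`() * q) = (p * q).[1] - (p * q).[0] - Iint (p * q^`()).
Proof.
have := @ftc (p * q) _ (erefl _); rewrite derivM.
have -> : p^`() * q + p * q^`() = 1 *: (p^`() * q) + p * q^`() by rewrite scale1r.
rewrite Iint_lin mul1r => <-; ring.
Qed.

End PolyAux.


Section Leg.
Variable R : realType.

Lemma derivn_mult (a : R) n r m : (m <= n)%N ->
  exists r', (('X - a%:P)^+n * r)^`(m) = ('X - a%:P)^+(n - m) * r'.
Proof.
elim: m => [|m IH] hm; first by exists r; rewrite derivn0 subn0.
have [r' e] := IH (ltnW hm).
rewrite derivnS e.
have -> : (n - m = (n - m.+1).+1)%N by lia.
set k := (n - m.+1)%N.
exists (r' *+ k.+1 + ('X - a%:P) * r'^`()).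
rewrite derivM deriv_exp derivXsubC /= exprS; ring.
Qed.

Definition wpol (s : nat) : {poly R} := 'X ^+ s * ('X - 1) ^+ s.

Lemma wpol_root s m x : (m < s)%N -> (x = 0 \/ x = 1) -> ((wpol s)^`(m)).[x] = 0.
Proof.
move=> hm hx.
have [a [r [-> ->]]] : exists a r, x = a /\ wpol s = ('X - a%:P)^+s * r.
  case: hx => ->.
    by exists 0, (('X - 1) ^+ s); rewrite /wpol polyC0 subr0.
  by exists 1, ('X ^+ s); rewrite /wpol polyC1 mulrC.
have [r' ->] := derivn_mult a r (ltnW hm).
rewrite hornerM horner_exp hornerXsubC subrr expr0n.
have -> : (s - m == 0)%N = false by apply/negbTE; lia.
by rewrite mul0r.
Qed.

Lemma size_deriv_le (Q : {poly R}) j : (size Q <= j.+1)%N -> (size Q^`() <= j)%N.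
Proof.
have [->|nz] := eqVneq Q 0; first by rewrite deriv0 size_poly0.
move=> h; have := lt_size_deriv nz; lia.
Qed.

Lemma wpol_orth s j : (j <= s)%N -> forall Q : {poly R}, (size Q <= j)%N ->
  Iint (Q * (wpol s)^`(j)) = 0.
Proof.
elim: j => [|j IH] hj Q hQ.
  by move/size_poly_leq0P: hQ => ->; rewrite mul0r Iint0.
rewrite derivnS mulrC Iint_ibp !hornerM !wpol_root ?mul0r ?subr0; try lia; auto.
rewrite mulrC IH ?oppr0 ?addr0 //; [lia | exact: size_deriv_le].
Qed.

Lemma shLeg_orth s (Q : {poly R}) : (size Q <= s)%N -> Iint (Q * shLeg R s) = 0.
Proof. by move=> h; apply: (@wpol_orth s s). Qed.

Lemma size_wpol s : size (wpol s) = (2 * s).+1.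
Proof.
rewrite /wpol size_mul ?size_polyXn -?polyC1 ?size_exp_XsubC; try lia.
  by rewrite -size_poly_eq0 size_polyXn.
by rewrite -size_poly_eq0 size_exp_XsubC.
Qed.

Lemma monic_wpol s : wpol s \is monic.
Proof. by rewrite /wpol monicMl ?monicXn // monic_exp // -polyC1 monicXsubC. Qed.

Lemma size_shLeg s : size (shLeg R s) = s.+1.
Proof.
apply/eqP; rewrite eqn_leq; apply/andP; split.
  apply/leq_sizeP => i hi; rewrite /shLeg -/(wpol s) coef_derivn.
  by rewrite (leq_sizeP _ _ (leqnn _)) ?mul0rn // size_wpol; lia.
rewrite ltnNge; apply/negP => /leq_sizeP /(_ s (leqnn s)).
rewrite /shLeg -/(wpol s) coef_derivn.
have -> : (s + s = (size (wpol s)).-1)%N by rewrite size_wpol; lia.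
rewrite -lead_coefE (monicP (monic_wpol s)) => /eqP.
rewrite pnatr_eq0 size_wpol -[_ == 0%N]negbK -lt0n ffact_gt0 /=; lia.
Qed.

End Leg.


Section Gauss.
Variables (R : realType) (s : nat) (c : 'I_s -> R).
Hypothesis hc : GL_nodes c.

Lemma lagq_at j k : j != k -> (lagq c k).[c j] = 0.
Proof.
move=> hjk; rewrite /lagq horner_prod (bigD1 j) //=.
by rewrite hornerXsubC subrr mul0r.
Qed.

Lemma lagq_neq0 k : (lagq c k).[c k] != 0.
Proof.
rewrite /lagq horner_prod; apply/prodf_neq0 => i hi.
rewrite hornerXsubC subr_eq0; apply/negP => /eqP /(proj1 hc) e.
by move: hi; rewrite e eqxx.
Qed.

Definition Lag k : {poly R} := ((lagq c k).[c k])^-1 *: lagq c k.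

Lemma Lag_at j k : (Lag k).[c j] = (j == k)%:R.
Proof.
rewrite /Lag hornerZ; case: eqVneq => [->|h].
  by rewrite mulVf ?lagq_neq0.
by rewrite (lagq_at h) mulr0.
Qed.

Lemma size_lagq k : (size (lagq c k) <= s)%N.
Proof.
apply: leq_trans (size_poly_prod_leq _ _) _.
rewrite (eq_bigr (fun _ => 2%N)); last by move=> i _; rewrite size_XsubC.
rewrite sum_nat_const.
have -> : #|(fun i : 'I_s => i != k)| = s.-1.
  by have := cardC1 k; rewrite card_ord.
have := ltn_ord k; lia.
Qed.

Lemma size_Lag k : (size (Lag k) <= s)%N.
Proof. exact: leq_trans (size_scale_leq _ _) (size_lagq k). Qed.

Lemma sum_delta (f : 'I_s -> R) i : \sum_k f k * (i == k)%:R = f i.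
Proof.
rewrite (bigD1 i) //= eqxx mulr1 big1 ?addr0 // => k hk.
by rewrite eq_sym (negPf hk) mulr0.
Qed.

Lemma interp (P : {poly R}) : (size P <= s)%N ->
  P = \sum_k P.[c k] *: Lag k.
Proof.
move=> hP; apply/eqP; rewrite -subr_eq0; apply/negPn/negP => nz.
have := max_poly_roots nz (rs := map c (enum 'I_s)).
rewrite size_map size_enum_ord map_inj_uniq ?enum_uniq; last exact: (proj1 hc).
have -> : all (root (P - \sum_k P.[c k] *: Lag k)) [seq c i | i <- enum 'I_s].
  apply/allP => x /mapP [j _ ->]; apply/eqP.
  rewrite hornerD hornerN horner_sum.
  under eq_bigr do rewrite hornerZ Lag_at.
  by rewrite sum_delta subrr.
move=> /(_ isT isT).
apply/negP; rewrite -leqNgt.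
apply: leq_trans (size_polyD _ _) _; rewrite size_polyN geq_max hP /=.
elim/big_ind: _ => //; first by rewrite size_poly0.
  by move=> x y hx hy; apply: leq_trans (size_polyD _ _) _; rewrite geq_max hx hy.
by move=> i _; apply: leq_trans (size_scale_leq _ _) (size_Lag i).
Qed.

Lemma Iint_Lag k : Iint (Lag k) = GL_b c k.
Proof.
have -> : Lag k = ((lagq c k).[c k])^-1 *: lagq c k + 0 by rewrite addr0.
by rewrite Iint_lin Iint0 addr0 /GL_b /Iint mulrC.
Qed.

Lemma IintD (p q : {poly R}) : Iint (p + q) = Iint p + Iint q.
Proof. by rewrite -{1}(scale1r p) Iint_lin mul1r. Qed.

Lemma gauss (P : {poly R}) : (0 < s)%N -> (size P <= 2 * s)%N ->
  Iint P = \sum_k GL_b c k * P.[c k].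
Proof.
move=> hs hP.
set pi := shLeg R s.
have hpi : size pi = s.+1 by apply: size_shLeg.
have pinz : pi != 0 by rewrite -size_poly_eq0 hpi.
pose Q : {poly R} := P %/ pi. pose Rm : {poly R} := P %% pi.
have eP : P = Q * pi + Rm := divp_eq P pi.
have hRm : (size Rm <= s)%N by have := ltn_modp P pi; rewrite pinz hpi.
have hQ : (size Q <= s)%N.
  have [->|Qnz] := eqVneq Q 0; first by rewrite size_poly0.
  have : (size (Q * pi)%R <= 2 * s)%N.
    have -> : Q * pi = P - Rm by rewrite eP addrK.
    apply: leq_trans (size_polyD _ _) _; rewrite size_polyN geq_max hP /=.
    by apply: leq_trans hRm _; rewrite mul2n -addnn leq_addr.
  rewrite size_mul // hpi addnS /= => h; rewrite -(leq_add2r s); apply: leq_trans h _; by rewrite mul2n -addnn.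
rewrite eP IintD shLeg_orth // add0r {1}(interp hRm) Iint_sum.
apply: eq_bigr => k _.
rewrite Iint_Lag hornerD hornerM.
by have /rootP -> := (proj2 hc) k; rewrite mulr0 add0r mulrC.
Qed.

Lemma sum_delta' (f : 'I_s -> R) i : \sum_k f k * (k == i)%:R = f i.
Proof. by rewrite -(sum_delta f i); apply: eq_bigr => k _; rewrite eq_sym. Qed.

Lemma size_mul2 (p q : {poly R}) : (size p <= s)%N -> (size q <= s.+1)%N ->
  (size (p * q)%R <= 2 * s)%N.
Proof.
move=> hp hq; apply: leq_trans (size_polyMleq _ _) _.
rewrite -subn1 leq_subLR add1n.
by apply: leq_trans (leq_add hp hq) _; rewrite addnS mul2n -addnn.
Qed.

Lemma GL_b_ge0 k : (0 < s)%N -> 0 <= GL_b c k.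
Proof.
move=> hs.
have hsz : (size (Lag k * Lag k)%R <= 2 * s)%N.
  by apply: size_mul2; [exact: size_Lag | exact: leq_trans (size_Lag k) _].
have e := gauss hs hsz.
have -> : GL_b c k = Iint (Lag k * Lag k).
  rewrite e -(sum_delta' (GL_b c) k); apply: eq_bigr => j _.
  by rewrite hornerM Lag_at -natrM mulnb andbb.
rewrite /Iint.
have [x _ ] := poly_mvt (polyint (Lag k * Lag k)) (@ltr01 R).
rewrite polyint_at0 subr0 polyint_deriv subr0 mulr1 hornerM => ->.
by rewrite -expr2 sqr_ge0.
Qed.

Definition Aint j : {poly R} := ((lagq c j).[c j])^-1 *: polyint (lagq c j).

Lemma Aint_deriv j : (Aint j)^`() = Lag j.
Proof. by rewrite /Aint derivZ polyint_deriv. Qed.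

Lemma Aint_at0 j : (Aint j).[0] = 0.
Proof. by rewrite /Aint hornerZ polyint_at0 mulr0. Qed.

Lemma GL_aE i j : GL_a c i j = (Aint j).[c i].
Proof. by rewrite /GL_a /Aint hornerZ mulrC. Qed.

Lemma GL_bE j : GL_b c j = (Aint j).[1].
Proof. by rewrite /GL_b /Aint hornerZ mulrC. Qed.

Lemma size_Aint j : (size (Aint j) <= s.+1)%N.
Proof.
apply: leq_trans (size_scale_leq _ _) _.
by apply: leq_trans (size_polyint _) _; rewrite ltnS size_lagq.
Qed.

Lemma sympl i j : (0 < s)%N ->
  GL_b c i * GL_a c i j + GL_b c j * GL_a c j i = GL_b c i * GL_b c j.
Proof.
move=> hs.
pose p := Lag i * Aint j + Aint i * Lag j.
have hp : (size p <= 2 * s)%N.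
  apply: leq_trans (size_polyD _ _) _; rewrite geq_max.
  by rewrite size_mul2 ?size_Lag ?size_Aint // mulrC size_mul2 ?size_Lag ?size_Aint.
have e1 : Iint p = GL_b c i * GL_b c j.
  rewrite (@ftc _ (Aint i * Aint j)); last by rewrite derivM !Aint_deriv.
  by rewrite !hornerM !Aint_at0 mul0r subr0 !GL_bE.
rewrite -e1 (gauss hs hp) /p.
under eq_bigr do rewrite hornerD !hornerM !Lag_at mulrDr.
rewrite big_split /=.
under eq_bigr do rewrite mulrCA.
rewrite [X in _ = X + _](eq_bigr (fun k => (GL_b c k * (Aint j).[c k]) * (k == i)%:R)); last by move=> k _; rewrite mulrC.
rewrite [X in _ = _ + X](eq_bigr (fun k => (GL_b c k * (Aint i).[c k]) * (k == j)%:R)); last by move=> k _; rewrite mulrA.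
by rewrite !sum_delta' !GL_aE.
Qed.

End Gauss.


Section Vec.
Variables (R : realType) (M : nat) (l : 'cV[R]_M) (S : 'M[R]_M).
Hypothesis hS : S^T = S.

Definition Lin (v : 'cV[R]_M) : R := (l^T *m v) 0 0.
Definition Bf (u v : 'cV[R]_M) : R := (u^T *m S *m v) 0 0.

Lemma Lin_comb u a (I : finType) (f : I -> R) (v : I -> 'cV[R]_M) :
  Lin (u + a *: \sum_i f i *: v i) = Lin u + a * \sum_i f i * Lin (v i).
Proof.
rewrite /Lin mulmxDr -scalemxAr mulmx_sumr mxE [X in _ + X]mxE summxE mulr_sumr.
congr (_ + _); rewrite mulr_sumr; apply: eq_bigr => i _.
by rewrite -scalemxAr mxE.
Qed.

Lemma Bf_combl u a (I : finType) (f : I -> R) (v : I -> 'cV[R]_M) w :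
  Bf (u + a *: \sum_i f i *: v i) w = Bf u w + a * \sum_i f i * Bf (v i) w.
Proof.
rewrite /Bf linearD /= linearZ /= linear_sum /= !mulmxDl -!scalemxAl !mulmx_suml.
rewrite mxE [X in _ + X]mxE summxE mulr_sumr.
rewrite mulr_sumr; congr (_ + _); apply: eq_bigr => i _.
by rewrite linearZ /= -!scalemxAl mxE.
Qed.

Lemma Bf_combr u a (I : finType) (f : I -> R) (v : I -> 'cV[R]_M) w :
  Bf w (u + a *: \sum_i f i *: v i) = Bf w u + a * \sum_i f i * Bf w (v i).
Proof.
rewrite /Bf mulmxDr -scalemxAr mulmx_sumr mxE [X in _ + X]mxE summxE mulr_sumr.
rewrite mulr_sumr; congr (_ + _); apply: eq_bigr => i _.
by rewrite -scalemxAr mxE.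
Qed.

Lemma Bf_sym u v : Bf u v = Bf v u.
Proof.
have e : forall X : 'M[R]_1, X 0 0 = X^T 0 0 by move=> X; rewrite mxE.
by rewrite /Bf e !trmx_mul trmxK hS mulmxA.
Qed.

Lemma dE_stage (yt Yi Fi : 'cV[R]_M) dt (I : finType) (a : I -> R) (Fj : I -> 'cV[R]_M) :
  Yi = yt + dt *: \sum_j a j *: Fj j ->
  dEtot l S Yi Fi = Lin Fi + 2 * Bf Fi yt + 2 * dt * \sum_j a j * Bf Fi (Fj j).
Proof.
move=> eY.
have -> : dEtot l S Yi Fi = Lin Fi + Bf Fi Yi + Bf Yi Fi by [].
rewrite eY Bf_combr Bf_combl (Bf_sym yt Fi).
under [X in _ + _ + (_ + _ * X) = _]eq_bigr do rewrite (Bf_sym (Fj _) Fi).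
ring.
Qed.

Lemma Etot_step (yt y1 : 'cV[R]_M) dt (I : finType) (b : I -> R) (Fi : I -> 'cV[R]_M) :
  y1 = yt + dt *: \sum_i b i *: Fi i ->
  Etot l S y1 - Etot l S yt =
    dt * \sum_i b i * (Lin (Fi i) + 2 * Bf (Fi i) yt)
    + dt ^+ 2 * \sum_i b i * \sum_j b j * Bf (Fi i) (Fi j).
Proof.
move=> e1.
have -> : forall z, Etot l S z = Lin z + Bf z z by [].
rewrite {1}e1 Lin_comb {1}e1 Bf_combl e1 Bf_combr.
under [X in _ + _ + (_ + _ * X) - _ = _]eq_bigr do rewrite Bf_combr.
under [X in _ + _ + (_ + _ * X + _) - _ = _]eq_bigr do rewrite (Bf_sym yt).
have s1 : \sum_i b i * (Bf (Fi i) yt + dt * \sum_j b j * Bf (Fi i) (Fi j)) =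
  \sum_i b i * Bf (Fi i) yt + dt * \sum_i b i * \sum_j b j * Bf (Fi i) (Fi j).
  rewrite mulr_sumr -big_split /=; apply: eq_bigr => i _; ring.
have s2 : \sum_i b i * (Lin (Fi i) + 2 * Bf (Fi i) yt) =
  \sum_i b i * Lin (Fi i) + 2 * \sum_i b i * Bf (Fi i) yt.
  rewrite mulr_sumr -big_split /=; apply: eq_bigr => i _; ring.
rewrite s1 s2; change (Etot l S yt) with (Lin yt + Bf yt yt); ring.
Qed.

End Vec.

Lemma sum3 (R : realType) (I : finType) (b X Z E : I -> R) k :
  \sum_i b i * (X i + k * Z i + E i) =
  \sum_i b i * X i + k * \sum_i b i * Z i + \sum_i b i * E i.
Proof. rewrite mulr_sumr -!big_split /=; apply: eq_bigr => i _; ring. Qed.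

Unset Implicit Arguments.

Theorem proposition1 (R : realType) (M : nat)
  (F : 'cV[R]_M -> 'cV[R]_M)
  (l : 'cV[R]_M) (S : 'M[R]_M) (hS : S^T = S)
  (Ebnd Ejump : 'cV[R]_M -> R)
  (hjump : forall y, 0 <= Ejump y)
  (hlaw : forall y, dEtot l S y (F y) + Ebnd y = - Ejump y)
  (s : nat) (hs : (0 < s)%N) (c : 'I_s -> R) (hc : GL_nodes c)
  (dt : R) (hdt : 0 < dt) (K : nat) (y0 : 'cV[R]_M)
  (y : nat -> 'cV[R]_M) (Y : nat -> 'I_s -> 'cV[R]_M)
  (hy0 : y 0%N = y0)
  (hstage : forall tau, (tau < K)%N -> forall i,
      Y tau i = y tau + dt *: \sum_(j < s) GL_a c i j *: F (Y tau j))
  (hstep : forall tau, (tau < K)%N ->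
      y tau.+1 = y tau + dt *: \sum_(i < s) GL_b c i *: F (Y tau i)) :
  forall tau, (tau < K)%N ->
    Etot l S (y tau.+1) - Etot l S (y tau)
      + dt * \sum_(i < s) GL_b c i * Ebnd (Y tau i) <= 0.
Proof.
move=> tau ht.
pose Fv i := F (Y tau i).
pose b := GL_b c. pose a := GL_a c.
pose Bm i j := Bf S (Fv i) (Fv j).
rewrite (Etot_step l hS (hstep tau ht)).
have hl i : Lin l (Fv i) + 2 * Bf S (Fv i) (y tau)
    + 2 * dt * \sum_j a i j * Bm i j + Ebnd (Y tau i) = - Ejump (Y tau i).
  by rewrite -(dE_stage l hS (Fv i) (hstage tau ht i)) hlaw.
have hsym : \sum_i b i * \sum_j b j * Bm i j = 2 * \sum_i b i * \sum_j a i j * Bm i j.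
  have e1 : \sum_i b i * \sum_j b j * Bm i j
      = \sum_i \sum_j (b i * a i j + b j * a j i) * Bm i j.
    apply: eq_bigr => i _; rewrite mulr_sumr; apply: eq_bigr => j _.
    by rewrite /b /a (sympl hc i j hs) mulrA.
  rewrite e1.
  rewrite (eq_bigr (fun i => \sum_j b i * a i j * Bm i j + \sum_j b j * a j i * Bm i j)); last first.
    by move=> i _; rewrite -big_split; apply: eq_bigr => j _; rewrite mulrDl.
  rewrite big_split /= [X in _ + X = _]exchange_big /=.
  have e2 : \sum_j \sum_i b j * a j i * Bm i j = \sum_i \sum_j b i * a i j * Bm i j.
    by apply: eq_bigr => i _; apply: eq_bigr => j _; rewrite /Bm (Bf_sym hS).
  rewrite e2 mulr2n mulrDl mul1r; congr (_ + _); apply: eq_bigr => i _; by rewrite mulr_sumr; apply: eq_bigr => j _; rewrite mulrA.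
change (\sum_i GL_b c i * \sum_j GL_b c j * Bf S (F (Y tau i)) (F (Y tau j)))
  with (\sum_i b i * \sum_j b j * Bm i j).
rewrite hsym.
have hsum : \sum_i b i * ((Lin l (Fv i) + 2 * Bf S (Fv i) (y tau)) + (2 * dt) * (\sum_j a i j * Bm i j) + Ebnd (Y tau i))
    = \sum_i b i * - Ejump (Y tau i).
  by apply: eq_bigr => i _; rewrite -hl.
rewrite sum3 in hsum.
have -> : dt * \sum_i GL_b c i * (Lin l (F (Y tau i)) + 2 * Bf S (F (Y tau i)) (y tau)) +
  dt ^+ 2 * (2 * \sum_i b i * \sum_j a i j * Bm i j) +
  dt * \sum_(i < s) GL_b c i * Ebnd (Y tau i) = dt * \sum_i b i * - Ejump (Y tau i).
  by rewrite -hsum; rewrite /b /Fv; ring.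
apply: mulr_ge0_le0; first exact: ltW.
apply: sumr_le0 => i _; apply: mulr_ge0_le0; first exact: GL_b_ge0.
by rewrite oppr_le0.
Qed.
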